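(* Let a control system $S$ and a target system $T$ have ontic state spaces $\Omega_S$ and $\Omega_T$ (each $\mathbb{Z}_d^{2n}$ or $\mathbb{R}^{2n}$ for the respective number of elementary systems, of the same type). Let $V_S^i$ be an isotropic subspace of $\Omega_S$ and $\vec v_{s,1}^i,\dots,\vec v_{s,k}^i\in\Omega_S$ valuations such that the cosets $(V_S^i)^\perp+\vec v_{s,j}^i$, $j=1,\dots,k$, form a partition of $\Omega_S$, so that $(V_S^i,\vec v_{s,j}^i)$ are the possible states of $S$. Let $(V_T^i,\vec v_T^i)$ be the initial valid epistemic state of $T$ and let $S_{ST}$ be a symplectic transformation of $\Omega_S\oplus\Omega_T$. For each $j$, let $(V_T^{f,j},\vec v_T^{f,j})$ denote the marginal on $T$ of the state obtained by applying $S_{ST}$ to the product state $(V_S^i\oplus V_T^i,\ \vec v_{s,j}^i\oplus\vec v_T^i)$. Then for any $j,l$, the marginal target states for $j$ and $l$ are either identical or orthogonal. Moreover, grouping the indices $j$ into classes of identical marginal target states, every class contains the same number of indices.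
   Context: Toy theory (quadrature formalism): ontic states $\vec m\in\Omega$, coordinates $(q_1,p_1,\dots)$; observables $\vec f\in\Omega$ with value $\vec f^T\vec m$; Poisson bracket $[\vec f,\vec g]=\sum_i(f_{2i-1}g_{2i}-f_{2i}g_{2i-1})$. A valid epistemic state $(V,\vec v)$ has $V$ an isotropic subspace/submodule ($[\vec f,\vec g]=0$ for $\vec f,\vec g\in V$); its compatible ontic states are $V^\perp+\vec v$ with $V^\perp=\{\vec m:\vec f^T\vec m=0\ \forall\vec f\in V\}$, uniformly distributed. A symplectic matrix (preserving the Poisson bracket) $\Sigma$ acts by $(V,\vec v)\mapsto((\Sigma^T)^{-1}V,\Sigma\vec v)$. The marginal on $T$ of a joint state is the projection of the set of compatible ontic states (and of the uniform distribution) onto $\Omega_T$. Two epistemic states are orthogonal if their sets of compatible ontic states are disjoint. Physically, this describes an agent preparing $T$ conditionally on the outcome $j$ of a measurement of $S$. *)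

(* Defs.v *)
From HB Require Import structures.
From mathcomp Require Import all_boot all_order all_algebra.
From mathcomp Require Import boolp classical_sets.
Set Implicit Arguments. Unset Strict Implicit. Unset Printing Implicit Defensive.
Import GRing.Theory.
Local Open Scope ring_scope.
Local Open Scope classical_set_scope.

(* Ontic states / observables of an m-dimensional phase space are column
   vectors 'cV[K]_m, coordinates ordered (q_1,p_1,q_2,p_2,...), i.e. with
   0-based indices: q at even positions, p at odd positions. *)

(* Symplectic form: [f,g] = f^T J g with J = diag of blocks [[0,1],[-1,0]]. *)
Definition Jmx (K : comNzRingType) (m : nat) : 'M[K]_m :=
  \matrix_(i, j) (if odd j && (i.+1 == j :> nat) then 1
                  else if odd i && (j.+1 == i :> nat) then -1 else 0).

Definition pbracket (K : comNzRingType) (m : nat) (f g : 'cV[K]_m) : K :=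
  (f^T *m Jmx K m *m g) 0 0.

Definition oval (K : comNzRingType) (m : nat) (f x : 'cV[K]_m) : K :=
  (f^T *m x) 0 0.

Definition isotropic (K : comNzRingType) (m : nat) (V : set 'cV[K]_m) : Prop :=
  [/\ V 0,
      (forall f g, V f -> V g -> V (f + g)),
      (forall (a : K) f, V f -> V (a *: f)) &
      (forall f g, V f -> V g -> pbracket f g = 0)].

Record estate (K : comNzRingType) (m : nat) :=
  EState { esp : set 'cV[K]_m ; evl : 'cV[K]_m }.

Definition valid (K : comNzRingType) (m : nat) (s : estate K m) : Prop :=
  isotropic (esp s).

Definition perp (K : comNzRingType) (m : nat) (V : set 'cV[K]_m) : set 'cV[K]_m :=
  [set x | forall f, V f -> oval f x = 0].

Definition ontic (K : comNzRingType) (m : nat) (s : estate K m) : set 'cV[K]_m :=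
  [set x | perp (esp s) (x - evl s)].

Definition symplectic (K : comNzRingType) (m : nat) (Sg : 'M[K]_m) : Prop :=
  forall f g, pbracket (Sg *m f) (Sg *m g) = pbracket f g.

(* action (V,v) |-> ((Sg^T)^{-1} V, Sg v); (Sg^T)^{-1} V = {f | Sg^T f \in V} *)
Definition act (K : comNzRingType) (m : nat) (Sg : 'M[K]_m) (s : estate K m)
  : estate K m :=
  EState [set f | esp s (Sg^T *m f)] (Sg *m evl s).

Definition prod_state (K : comNzRingType) (mS mT : nat)
  (s : estate K mS) (t : estate K mT) : estate K (mS + mT) :=
  EState [set h | exists f g, [/\ h = col_mx f g, esp s f & esp t g]]
         (col_mx (evl s) (evl t)).

Definition marginalT (K : comNzRingType) (mS mT : nat) (s : estate K (mS + mT))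
  : set 'cV[K]_mT :=
  [set y | exists x, ontic s (col_mx x y)].

(* Main.v *)
Require Import Defs.
From HB Require Import structures.
From mathcomp Require Import all_boot all_order all_algebra.
From mathcomp Require Import boolp classical_sets.
Local Open Scope ring_scope.
Local Open Scope classical_set_scope.
Import GRing.Theory.

Section Aux.
Variable K : comNzRingType.

Lemma ovalD m (f x y : 'cV[K]_m) : oval f (x + y) = oval f x + oval f y.
Proof. by rewrite /oval mulmxDr mxE. Qed.
Lemma ovalN m (f x : 'cV[K]_m) : oval f (- x) = - oval f x.
Proof. by rewrite /oval mulmxN mxE. Qed.
Lemma oval0 m (f : 'cV[K]_m) : oval f 0 = 0.
Proof. by rewrite /oval mulmx0 mxE. Qed.

Lemma perp0 m (V : set 'cV[K]_m) : perp V 0.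
Proof. by move=> f _; rewrite oval0. Qed.
Lemma perpD m (V : set 'cV[K]_m) x y : perp V x -> perp V y -> perp V (x + y).
Proof. by move=> Px Py f Vf; rewrite ovalD Px // Py // addr0. Qed.
Lemma perpN m (V : set 'cV[K]_m) x : perp V x -> perp V (- x).
Proof. by move=> Px f Vf; rewrite ovalN Px // oppr0. Qed.
Lemma perpB m (V : set 'cV[K]_m) x y : perp V x -> perp V y -> perp V (x - y).
Proof. by move=> Px Py; apply: perpD => //; apply: perpN. Qed.

Lemma zid1 (V : zmodType) (b a z1 z2 : V) : (b - a) - (z1 - z2) = (b - z1) - (a - z2).
Proof. by rewrite !opprB addrACA [RHS]addrACA [- a + _]addrC. Qed.

Definition Mset m1 m2 (P : set 'cV[K]_(m1 + m2)) (z : 'cV[K]_(m1 + m2)) :=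
  [set y : 'cV[K]_m2 | exists x, P (col_mx x y - z)].
Definition Qs m1 m2 (P : set 'cV[K]_(m1 + m2)) (d : 'cV[K]_(m1 + m2)) :=
  exists x : 'cV[K]_m1, P (col_mx x 0 - d).

Lemma zid2 (V : zmodType) (a c z1 z2 : V) : (a + c) - z1 = (a - z2) + (c - (z1 - z2)).
Proof. by rewrite opprB addrA addrACA subrK addrA. Qed.
Lemma zid3 (V : zmodType) (a c z1 z2 : V) : (a - c) - z2 = (a - z1) - (c - (z1 - z2)).
Proof. by rewrite zid1 opprB [z1 - z2 - z1]addrAC subrr sub0r. Qed.

End Aux.
Arguments Mset {K m1 m2}.
Arguments Qs {K m1 m2}.
Section Aux2.
Variable K : comNzRingType.
Variables m1 m2 : nat.
Variable P : set 'cV[K]_(m1 + m2).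
Hypothesis P0 : P 0.
Hypothesis PB : forall a b, P a -> P b -> P (a - b).

Lemma PN a : P a -> P (- a).
Proof. by move=> h; rewrite -sub0r; apply: PB. Qed.
Lemma PD a b : P a -> P b -> P (a + b).
Proof. by move=> ha hb; rewrite -[b]opprK; apply: PB => //; apply: PN. Qed.

Lemma Mset_meet z1 z2 y : Mset P z1 y -> Mset P z2 y -> Qs P (z1 - z2).
Proof.
move=> [x1 h1] [x2 h2]; exists (x1 - x2).
have -> : col_mx (x1 - x2) (0 : 'cV[K]_m2) = col_mx x1 y - col_mx x2 y.
  by rewrite opp_col_mx add_col_mx subrr.
by rewrite zid1; apply: PB.
Qed.

Lemma Mset_eq z1 z2 : Qs P (z1 - z2) -> Mset P z1 = Mset P z2.
Proof.
move=> [x0 h]; apply/seteqP; split => y [x hx].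
- exists (x - x0).
  have -> : col_mx (x - x0) y = col_mx x y - col_mx x0 0.
    by rewrite opp_col_mx add_col_mx oppr0 addr0.
  by rewrite (zid3 _ _ _ z1 z2); apply: PB.
- exists (x + x0).
  have -> : col_mx (x + x0) y = col_mx x y + col_mx x0 0.
    by rewrite add_col_mx addr0.
  by rewrite (zid2 _ _ _ z1 z2); apply: PD.
Qed.

Lemma Mset_self z : Mset P z (dsubmx z).
Proof. by exists (usubmx z); rewrite vsubmxK subrr. Qed.

Lemma Qs_eq z1 z2 : Mset P z1 = Mset P z2 <-> Qs P (z1 - z2).
Proof.
split; last exact: Mset_eq.
move=> e; apply: (@Mset_meet _ _ (dsubmx z1)); first exact: Mset_self.
by rewrite -e; apply: Mset_self.
Qed.

Lemma QsB d1 d2 : Qs P d1 -> Qs P d2 -> Qs P (d1 - d2).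
Proof.
move=> [x1 h1] [x2 h2]; exists (x1 - x2).
have -> : col_mx (x1 - x2) (0 : 'cV[K]_m2) = col_mx x1 0 - col_mx x2 0.
  by rewrite opp_col_mx add_col_mx subrr.
by rewrite zid1; apply: PB.
Qed.

End Aux2.
Lemma zid4 (V : zmodType) (x l p : V) : p - l = x - ((x + l) - p).
Proof. by rewrite opprB opprD addrA addrACA subrr add0r. Qed.
Lemma zid5 (V : zmodType) (A B i : V) : (A - i) - (B - i) = A - B.
Proof. by rewrite opprB addrA subrK. Qed.
Lemma zid6 (V : zmodType) (a b j l : V) : (a - j + l) - (b - j + l) = a - b.
Proof. by rewrite opprD addrACA subrr addr0 opprB addrA subrK. Qed.

Theorem theorem6 (K : comNzRingType) (nS nT k : nat)
  (VS : set 'cV[K]_(nS.*2)) (vs : 'I_k -> 'cV[K]_(nS.*2))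
  (VT : set 'cV[K]_(nT.*2)) (vT : 'cV[K]_(nT.*2))
  (Sg : 'M[K]_(nS.*2 + nT.*2)) :
  isotropic VS ->
  (forall x, exists j, ontic (EState VS (vs j)) x) ->
  (forall j l, j != l -> ontic (EState VS (vs j)) `&` ontic (EState VS (vs l)) = set0) ->
  valid (EState VT vT) ->
  symplectic Sg ->
  let M := fun j : 'I_k =>
    marginalT (act Sg (prod_state (EState VS (vs j)) (EState VT vT))) in
  (forall j l, M j = M l \/ M j `&` M l = set0) /\
  (forall j l, #|[pred j' : 'I_k | `[< M j' = M j >] ]|
             = #|[pred l' : 'I_k | `[< M l' = M l >] ]|).
Proof.
move=> _ cover disj _ _ M.
set E := [set f : 'cV[K]_(nS.*2 + nT.*2) |
  exists f0 g, [/\ Sg^T *m f = col_mx f0 g, VS f0 & VT g]].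
set P := perp E.
have P0 : P 0 := @perp0 _ _ E.
have PB : forall a b, P a -> P b -> P (a - b) := @perpB _ _ E.
pose z j := Sg *m col_mx (vs j) vT.
have HM : forall j, M j = Mset P (z j) by [].
have Hz : forall j l, z j - z l = Sg *m col_mx (vs j - vs l) 0.
  by move=> j l; rewrite /z -mulmxBr opp_col_mx add_col_mx subrr.
pose G d := Qs P (Sg *m col_mx d (0 : 'cV[K]_(nT.*2))).
have Heq : forall j l, M j = M l <-> G (vs j - vs l).
  by move=> j l; rewrite !HM /G -Hz; exact: Qs_eq.
have GB : forall a b, G a -> G b -> G (a - b).
  move=> a b ha hb; rewrite /G.
  have -> : Sg *m col_mx (a - b) (0 : 'cV[K]_(nT.*2))
          = Sg *m col_mx a 0 - Sg *m col_mx b 0.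
    by rewrite -mulmxBr opp_col_mx add_col_mx subrr.
  exact: QsB.
have G0 : G 0.
  by exists 0; rewrite col_mx0 mulmx0 subr0.
have GW : forall w, perp VS w -> G w.
  move=> w Ww; exists 0; rewrite col_mx0 sub0r; apply: perpN.
  move=> f [f0 [g [ef Vf0 Vg]]]; rewrite /oval mulmxA.
  rewrite -[f^T *m Sg]trmxK trmx_mul trmxK ef tr_col_mx mul_row_col mulmx0 addr0.
  exact: Ww.
split.
  move=> j l; case: (pselect (exists y, M j y /\ M l y)) => [[y [hj hl]]|h].
    left; rewrite !HM in hj hl *; apply: Mset_eq => //; exact: Mset_meet hj hl.
  right; apply/seteqP; split=> y // [hj hl]; exfalso; apply: h; by exists y.
move=> j l.
have [idx Hidx] := choice cover.
have uniq : forall x a b, perp VS (x - vs a) -> perp VS (x - vs b) -> a = b.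
  move=> x a b ha hb; apply/eqP; apply/negPn/negP => nab.
  have := disj a b nab; move/seteqP=> [+ _] => /(_ x) h; exact: h.
pose phi j' := idx (vs j' - vs j + vs l).
have phi_inj : injective phi.
  move=> a b e; apply: (uniq (vs a)); first by rewrite subrr; exact: perp0.
  have ha := Hidx (vs a - vs j + vs l); have hb := Hidx (vs b - vs j + vs l).
  rewrite /phi in e; rewrite e in ha.
  have := @perpB _ _ _ _ _ ha hb; by rewrite zid5 zid6.
have key : forall j', (M j' = M j) <-> (M (phi j') = M l).
  move=> j'; rewrite !Heq.
  have Ww : G ((vs j' - vs j + vs l) - vs (phi j')) := GW _ (Hidx _).
  rewrite (zid4 _ (vs j' - vs j) (vs l) (vs (phi j'))); split => h; first exact: GB h Ww.
  have -> : vs j' - vs j = (vs j' - vs j - (vs j' - vs j + vs l - vs (phi j')))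
                         - (0 - (vs j' - vs j + vs l - vs (phi j'))).
    by rewrite sub0r opprK subrK.
  exact: (GB _ _ h (GB _ _ G0 Ww)).
transitivity #|[pred j' : 'I_k | `[< M (phi j') = M l >] ]|.
  apply: eq_card => j'; rewrite !inE.
  by rewrite (propext (key j')).
have hb : bijective phi := inj_card_bij phi_inj (leqnn _).
rewrite -(on_card_preimset (R := [pred l' : 'I_k | `[< M l' = M l >] ]) (onW_bij _ hb)).
by apply: eq_card => x; rewrite !inE.
Qed.
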